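(* Assume $S\neq\emptyset$, let $k\ge\max(1,k_1,\dots,k_m)$, and suppose $\mathcal{Q}_k(\tilde G)$ is closed in $\mathbb{R}[\tilde X]_{2k}$. Then the affine hyperplane $M=\{(1,x):x\in\mathbb{R}^n\}\subseteq\mathbb{R}^{n+1}$ intersects the relative interior of $\pi(\mathcal{Q}_k(\tilde G)^* )$.
   Context: $X=(X_1,\dots,X_n)$, $\tilde X=(X_0,X_1,\dots,X_n)$; $\mathbb{R}[\tilde X]_{2k}$ is the space of polynomials of degree at most $2k$. For $f\in\mathbb{R}[X]$ of degree $d$, its homogenization is $\tilde f(\tilde X)=X_0^df(X/X_0)$. Fix $g_1,\dots,g_m\in\mathbb{R}[X]$, $S=\{x\in\mathbb{R}^n:g_j(x)\ge0,\ j=1,\dots,m\}$, $k_j=\lceil\deg g_j/2\rceil$. For a finite set $H=\{h_1,\dots,h_r\}$ of polynomials, the $k$-th quadratic module is $\mathcal{Q}_k(H)=\{\sum_{j=0}^r\sigma_jh_j:h_0=1,\ \sigma_j\text{ sums of squares of polynomials},\ \deg(\sigma_jh_j)\le2k\}$. Let $\tilde G=\{\tilde g_1,\dots,\tilde g_m,X_0,\|\tilde X\|_2^2-1,1-\|\tilde X\|_2^2\}$. Identify linear functionals on $\mathbb{R}[\tilde X]_{2k}$ with sequences $y=(y_\alpha)_{\alpha\in\mathbb{N}^{n+1},|\alpha|\le2k}$ via the Riesz functional $L_y(\sum_\alpha q_\alpha\tilde X^\alpha)=\sum_\alpha q_\alpha y_\alpha$. The dual cone is $\mathcal{Q}_k(\tilde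 G)^*=\{y:L_y(p)\ge0\ \forall p\in\mathcal{Q}_k(\tilde G)\}$, and $\pi(y)=(L_y(X_0),L_y(X_1),\dots,L_y(X_n))\in\mathbb{R}^{n+1}$ is the projection onto the dual of the space of linear forms. *)

(* Defs.v *)
From mathcomp Require Import all_boot all_algebra.
From mathcomp Require Import mpoly.
From mathcomp Require Import all_classical all_reals topology normedtype.
Set Implicit Arguments. Unset Strict Implicit. Unset Printing Implicit Defensive.
Import GRing.Theory Num.Theory.
Local Open Scope ring_scope.
Import numFieldNormedType.Exports.
Local Open Scope classical_set_scope.

Section Defs.
Variable R : realType.

(* total degree of a polynomial (deg 0 := 0) *)
Definition mdegree {n} (p : {mpoly R[n]}) : nat := (msize p).-1.

Definition is_sos {n} (s : {mpoly R[n]}) : Prop :=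
  exists qs : seq {mpoly R[n]}, s = \sum_(q <- qs) q ^+ 2.

(* k-th quadratic module Q_k(H) with H = h_1..h_r given as a list, h_0 = 1 *)
Definition quadmod {n} (k : nat) (H : seq {mpoly R[n]}) : set {mpoly R[n]} :=
  [set p | exists sig : nat -> {mpoly R[n]},
     (forall j, (j <= size H)%N ->
        is_sos (sig j) /\ (mdegree (sig j * (1 :: H)`_j) <= 2 * k)%N) /\
     p = \sum_(j < (size H).+1) sig j * (1 :: H)`_j].

(* the monomial X^m in X_1..X_n viewed in X_0..X_n *)
Definition lift_mono {n} (m : 'X_{1..n}) : 'X_{1..n.+1} :=
  [multinom (if unlift ord0 i is Some j then m j else 0%N) | i < n.+1].

(* homogenization ~f = X_0^d f(X/X_0), d = deg f *)
Definition homogenize {n} (f : {mpoly R[n]}) : {mpoly R[n.+1]} :=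
  \sum_(m <- msupp f)
     f@_m *: ('X_ord0 ^+ (mdegree f - mdeg m) * 'X_[lift_mono m]).

Definition sqnorm_poly n : {mpoly R[n.+1]} := \sum_(i < n.+1) 'X_i ^+ 2.

Definition Gtilde {n} (g : seq {mpoly R[n]}) : seq {mpoly R[n.+1]} :=
  map homogenize g ++
  [:: 'X_ord0; sqnorm_poly n - 1; 1 - sqnorm_poly n].

Definition semialg {n} (g : seq {mpoly R[n]}) : set ('I_n -> R) :=
  [set x | forall j, (j < size g)%N -> 0 <= (g`_j).@[x]].

(* moment sequences y = (y_a)_{|a| <= 2k} and their Riesz functional *)
Definition mseq n k := 'X_{1..n.+1 < (2 * k).+1} -> R.

Definition riesz {n k} (y : mseq n k) (p : {mpoly R[n.+1]}) : R :=
  \sum_(a : 'X_{1..n.+1 < (2 * k).+1}) p@_a * y a.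

Definition dual_cone {n} k (C : set {mpoly R[n.+1]}) : set (mseq n k) :=
  [set y | forall p, C p -> 0 <= riesz y p].

(* projection onto the dual of linear forms *)
Definition proj_lin {n k} (y : mseq n k) : 'rV[R]_(n.+1) :=
  \row_(i < n.+1) riesz y 'X_i.

(* coordinates on R[~X]_{2k}: coefficient vectors w.r.t. the monomial basis *)
Definition poly_of_coefs n k
  (v : 'rV[R]_#|{: 'X_{1..n.+1 < (2 * k).+1}}|) : {mpoly R[n.+1]} :=
  \sum_(i < #|{: 'X_{1..n.+1 < (2 * k).+1}}|)
     v ord0 i *: 'X_[(enum_val i : 'X_{1..n.+1 < (2 * k).+1})].

Definition closed_in_deg n k (C : set {mpoly R[n.+1]}) : Prop :=
  closed [set v | C (@poly_of_coefs n k v)].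

Definition affine_hull {N} (P : set 'rV[R]_N) : set 'rV[R]_N :=
  [set z | exists (s : seq ('rV[R]_N * R)),
     (forall c, c \in s -> P c.1) /\ \sum_(c <- s) c.2 = 1 /\
     z = \sum_(c <- s) c.2 *: c.1].

Definition rel_interior {N} (P : set 'rV[R]_N) : set 'rV[R]_N :=
  [set x | P x /\ exists e : R, 0 < e /\
     (forall z, affine_hull P z -> ball x e z -> P z)].

End Defs.

Arguments dual_cone {R n} k C _.
Arguments closed_in_deg {R} n k C.
Arguments quadmod {R n} k H _.
Arguments proj_lin {R n k} y.
Arguments riesz {R n k} y p.

(* Main.v *)
Require Import Defs.
From mathcomp Require Import all_boot all_algebra.
From mathcomp Require Import mpoly.
From mathcomp Require Import all_classical all_reals topology normedtype.
From mathcomp Require Import order.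
Import Order.TTheory GRing.Theory Num.Theory.
Local Open Scope ring_scope.
Import numFieldNormedType.Exports.
Local Open Scope classical_set_scope.
From mathcomp Require Import lra zify.
Section S.
Variable R : realType.
Variable N : nat.

Lemma lin_bound (f : 'rV[R]_N -> R) :
  (forall a u w, f (a *: u + w) = a * f u + f w) ->
  exists K : R, 0 < K /\ forall (v : 'rV[R]_N) (e : R), 0 < e -> (forall j, `|v ord0 j| < e) -> `|f v| <= K * e.
Proof.
move=> lf.
have f0 : f 0 = 0.
  have := lf 1 0 0; rewrite scale1r addr0 mul1r => /esym/eqP.
  by rewrite -subr_eq0 addrK => /eqP.
have fZ a u : f (a *: u) = a * f u by rewrite -[a *: u]addr0 lf f0 addr0.
have fD u w : f (u + w) = f u + f w by have := lf 1 u w; rewrite scale1r mul1r.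
exists (\sum_(j < N) `|f (delta_mx 0 j)| + 1); split.
  by apply: ltr_wpDl => //; apply: sumr_ge0 => j _.
move=> v e e0 hv.
have -> : f v = \sum_(j < N) v 0 j * f (delta_mx 0 j).
  rewrite {1}(row_sum_delta v).
  elim/big_rec2: _ => [|j y1 y2 _ <-]; first exact: f0.
  by rewrite fD fZ.
apply: le_trans (ler_norm_sum _ _ _) _.
rewrite mulrDl mul1r mulr_suml.
rewrite -[X in X <= _]addr0; apply: lerD; last exact: ltW.
apply: ler_sum => j _; rewrite normrM mulrC ler_wpM2l //.
exact: ltW.
Qed.
Lemma span_max (P : set 'rV[R]_N) : exists s : seq 'rV[R]_N,
  (forall v, v \in s -> P v) /\ (forall q, P q -> q \in <<s>>%VS).
Proof.
pose pr := fun d => `[< exists s : seq 'rV[R]_N, (forall v, v \in s -> P v) /\ \dim <<s>>%VS = d >].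
have ex : exists d, pr d.
  by exists 0%N; apply/asboolP; exists [::]; split => //; rewrite span_nil dimv0.
have bd : forall d, pr d -> (d <= \dim (fullv : {vspace 'rV[R]_N}))%N.
  move=> d /asboolP [s [_ <-]]; exact/dimvS/subvf.
have [d /asboolP [s [sP sd]] dmax] := ex_maxnP ex bd.
exists s; split => // q Pq.
have sub : (<<s>> <= <<q :: s>>)%VS by rewrite span_cons addvSr.
have := dmax (\dim <<q :: s>>%VS).
have -> : pr (\dim <<q :: s>>%VS).
  apply/asboolP; exists (q :: s); split => // v; rewrite inE => /orP[/eqP->|]//; exact: sP.
move=> /(_ isT) le.
have : \dim <<s>>%VS == \dim <<q :: s>>%VS by rewrite eqn_leq dimvS // sd le.
move: (dimv_leqif_eq sub) => [_ ->] /eqP ->.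
by apply: memv_span; rewrite inE eqxx.
Qed.

End S.
Section T.
Variable R : realType.
Variable N : nat.
Lemma cone_ri (P : set 'rV[R]_N.+1) p :
  P 0 -> (forall u w, P u -> P w -> P (u + w)) ->
  (forall c u, 0 <= c -> P u -> P (c *: u)) ->
  (forall q, P q -> 0 <= q ord0 ord0) -> P p -> 0 < p ord0 ord0 ->
  exists x : 'rV[R]_N.+1, x ord0 ord0 = 1 /\ rel_interior P x.
Proof.
move=> P0 PD PZ P00 Pp p0.
have [s [sP sspan]] := @span_max R N.+1 P.
set t := in_tuple s.
have Ps (i : 'I_(size s)) : P s`_i by apply: sP; exact: mem_nth.
have Psum (c : 'I_(size s) -> R) : (forall i, 0 <= c i) ->
    P (\sum_(i < size s) c i *: s`_i).
  move=> c0; apply: (big_ind P P0 PD) => i _; exact: PZ (c0 i) (Ps i).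
pose x' := p + \sum_(i < size s) s`_i.
have x'0 : 0 < x' ord0 ord0.
  rewrite /x' mxE summxE; apply: ltr_wpDr => //.
  by apply: sumr_ge0 => i _; apply: P00.
pose c := (x' ord0 ord0)^-1.
have c0 : 0 < c by rewrite invr_gt0.
pose x := c *: x'.
have xE : x = c *: p + \sum_(i < size s) c *: s`_i.
  by rewrite /x /x' scalerDr scaler_sumr.
have /choice [K HK] : forall i : 'I_(size s), exists K : R, 0 < K /\
    forall (v : 'rV[R]_N.+1) (e : R), 0 < e -> (forall j, `|v ord0 j| < e) ->
      `|coord t i v| <= K * e.
  move=> i; apply: (@lin_bound R N.+1) => a u w; exact: linearP.
exists x; split.
  by rewrite /x mxE mulVf // gt_eqF.
split.
  rewrite xE; apply: PD; first exact: PZ (ltW c0) Pp.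
  by apply: Psum => i; exact: ltW.
pose KK := \sum_(i < size s) K i + 1.
have KK0 : 0 < KK by apply: ltr_wpDl => //; apply: sumr_ge0 => i _; exact/ltW/(proj1 (HK i)).
exists (c / KK); split; first exact: divr_gt0.
move=> z [s' [s'P [_ zE]]] bz.
have zin : z \in <<t>>%VS.
  rewrite zE big_seq; apply: memv_suml => cc cin; apply: memvZ; apply: sspan; exact: s'P.
have xin : x \in <<t>>%VS.
  rewrite /x /x'; apply: memvZ; apply: memvD; first exact: sspan.
  by apply: memv_suml => i _; apply: memv_span; exact: mem_nth.
have vin : z - x \in <<t>>%VS by exact: memvB.
have zE2 : z = c *: p + \sum_(i < size s) (c + coord t i (z - x)) *: s`_i.
  transitivity (x + (z - x)); first by rewrite addrC subrK.
  rewrite [X in x + X](coord_span vin) xE -addrA; congr (_ + _).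
  by rewrite -big_split /=; apply: eq_bigr => i _; rewrite scalerDl.
rewrite zE2; apply: PD; first exact: PZ (ltW c0) Pp.
apply: Psum => i.
have [K0 Kb] := HK i.
have hb : `|coord t i (z - x)| <= K i * (c / KK).
  apply: Kb; first exact: divr_gt0.
  move=> j; case: bz => _ /(_ ord0 j); rewrite /ball /= !mxE.
  by rewrite distrC.
have hk : K i * (c / KK) <= c.
  apply: (@le_trans _ _ (KK * (c / KK))).
    apply: ler_wpM2r; first exact/ltW/divr_gt0.
    rewrite /KK (bigD1 i) //= -addrA lerDl.
    by apply: addr_ge0 => //; apply: sumr_ge0 => j _; exact/ltW/(proj1 (HK j)).
  by rewrite mulrC divfK // gt_eqF.
move: hb; rewrite ler_norml => /andP[hl _].
lra.
Qed.
End T.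
Lemma liftE n (m : 'X_{1..n}) (i : 'I_n.+1) :
  @lift_mono n m i = (if unlift ord0 i is Some j then m j else 0)%N.
Proof. by rewrite /lift_mono mnmE. Qed.

Section C.
Variable R : realType.
Variables n k : nat.

Lemma riesz_add (y : mseq R n k) p q : riesz y (p + q) = riesz y p + riesz y q.
Proof. by rewrite /riesz -big_split; apply: eq_bigr => a _; rewrite mcoeffD mulrDl. Qed.

Lemma riesz0 (y : mseq R n k) : riesz y 0 = 0.
Proof. by rewrite /riesz big1 // => a _; rewrite mcoeff0 mul0r. Qed.

Lemma riesz_sum (y : mseq R n k) m (F : 'I_m -> {mpoly R[n.+1]}) :
  riesz y (\sum_(j < m) F j) = \sum_(j < m) riesz y (F j).
Proof.
by elim/big_rec2: _ => [|j y1 y2 _ <-]; [exact: riesz0 | rewrite riesz_add].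
Qed.

Lemma riesz_yD (y1 y2 : mseq R n k) p :
  riesz (fun a => y1 a + y2 a) p = riesz y1 p + riesz y2 p.
Proof. by rewrite /riesz -big_split; apply: eq_bigr => a _; rewrite mulrDr. Qed.

Lemma riesz_yZ c (y : mseq R n k) p :
  riesz (fun a => c * y a) p = c * riesz y p.
Proof. by rewrite /riesz mulr_sumr; apply: eq_bigr => a _; rewrite mulrCA. Qed.

Lemma riesz_y0 (p : {mpoly R[n.+1]}) : @riesz R n k (fun _ => 0 : R) p = 0 :> R.
Proof. by rewrite /riesz big1 // => a _; rewrite mulr0. Qed.

Lemma riesz_eval (v : 'I_n.+1 -> R) (p : {mpoly R[n.+1]}) :
  (msize p <= (2 * k).+1)%N ->
  @riesz R n k (fun a : 'X_{1..n.+1 < (2 * k).+1} => ('X_[a : 'X_{1..n.+1}]).@[v]) p = p.@[v].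
Proof.
move=> hp.
have -> : @riesz R n k (fun a : 'X_{1..n.+1 < (2 * k).+1} => ('X_[a : 'X_{1..n.+1}]).@[v]) p =
   (\sum_(a : 'X_{1..n.+1 < (2 * k).+1}) p@_a *: 'X_[a : 'X_{1..n.+1}]).@[v].
  by rewrite /riesz raddf_sum; apply: eq_bigr => a _; rewrite /= mevalZ.
suff -> : (\sum_(a : 'X_{1..n.+1 < (2 * k).+1}) p@_a *: 'X_[a : 'X_{1..n.+1}]) = p by [].
apply/mpolyP => m.
rewrite raddf_sum /=.
under eq_bigr => a _ do rewrite mcoeffZ mcoeffX.
case: (ltnP (mdeg m) (2 * k).+1) => hm.
  rewrite (bigD1 (BMultinom hm)) //= eqxx mulr1 big1 ?addr0 // => a ha.
  by move: ha; rewrite bmeqP /= => /negbTE ->; rewrite mulr0.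
rewrite big1; last first.
  move=> a _; case: eqP => [ea|]; last by rewrite mulr0.
  by move: (bmdeg a); rewrite ea ltnNge hm.
apply/esym/eqP; rewrite mcoeff_eq0; apply: msize_mdeg_ge.
exact: leq_trans hp hm.
Qed.

Lemma homog_eval (a : 'I_n -> R) (r : R) (f : {mpoly R[n]}) :
  (homogenize f).@[fun i => (if unlift ord0 i is Some j then a j else 1) * r^-1]
   = r^-1 ^+ mdegree f * f.@[a].
Proof.
rewrite /homogenize raddf_sum /= mevalE big_distrr /=.
rewrite !big_seq; apply: eq_bigr => m hm.
rewrite /= mevalZ mevalM rmorphXn /= mevalXU mevalX.
rewrite big_ord_recl liftE unlift_none expr0 mul1r mul1r.
rewrite [in LHS](eq_bigr (fun j : 'I_n => (a j ^+ m j) * r^-1 ^+ m j)); last by move=> j _; rewrite liftE liftK exprMn.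
rewrite big_split /= prodrXr -mdegE.
have hd : (mdeg m <= mdegree f)%N.
  by rewrite /mdegree -ltnS (leq_trans (msize_mdeg_lt hm)) // leqSpred.
have -> : r^-1 ^+ mdegree f = r^-1 ^+ (mdegree f - mdeg m) * r^-1 ^+ mdeg m.
  by rewrite -exprD subnK.
by rewrite mulrCA -mulrA; congr (_ * _); rewrite mulrA mulrC.
Qed.
End C.
Theorem mainTheorem12 (R : realType) (n : nat) (g : seq {mpoly R[n]}) (k : nat) :
  semialg g !=set0 ->
  (1 <= k)%N ->
  (forall j, (j < size g)%N -> (uphalf (mdegree g`_j) <= k)%N) ->
  closed_in_deg n k (quadmod k (Gtilde g)) ->
  exists x : 'rV[R]_(n.+1),
    x ord0 ord0 = 1 /\
    rel_interior (proj_lin @` dual_cone k (quadmod k (Gtilde g))) x.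
Proof.
move=> [a Sa] k1 _ _.
set Q := quadmod k (Gtilde g).
set P := proj_lin @` dual_cone k Q.
have QX0 : Q 'X_ord0.
  have hi : ((size g).+1 < (size (Gtilde g)).+1)%N.
    rewrite /Gtilde size_cat size_map /=; lia.
  have nthX : (1 :: Gtilde g)`_(size g).+1 = 'X_ord0.
    by rewrite /= /Gtilde nth_cat size_map ltnn subnn.
  have nthX' : (Gtilde g)`_(size g) = 'X_ord0.
    by rewrite /Gtilde nth_cat size_map ltnn subnn.
  exists (fun j => if j == (size g).+1 then 1 else 0); split.
    move=> j hj; case: eqP => [->|_]; split.
    - by exists [:: 1]; rewrite big_seq1 expr1n.
    - rewrite mul1r /= /Gtilde nth_cat size_map ltnn subnn /= /mdegree msizeX mdeg1; lia.
    - by exists [::]; rewrite big_nil.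
    - by rewrite mul0r /mdegree msize0.
  rewrite (bigD1 (Ordinal hi)) //= ?nthX ?nthX' eqxx mul1r big1 ?addr0 // => j hj.
  case: eqP => [ej|]; last by rewrite mul0r.
  by move: hj; rewrite -val_eqE /= ej eqxx.
pose r := Num.sqrt (1 + \sum_(i < n) a i ^+ 2).
have s0 : 0 < 1 + \sum_(i < n) a i ^+ 2.
  by apply: ltr_wpDr => //; apply: sumr_ge0 => i _; exact: sqr_ge0.
have r0 : 0 < r by rewrite sqrtr_gt0.
pose v : 'I_n.+1 -> R := fun i => (if unlift ord0 i is Some j then a j else 1) * r^-1.
have v0 : v ord0 = r^-1 by rewrite /v unlift_none mul1r.
have vn : \sum_(i < n.+1) v i ^+ 2 = 1.
  rewrite big_ord_recl v0.
  rewrite (eq_bigr (fun j : 'I_n => a j ^+ 2 * r^-1 ^+ 2)); last first.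
    by move=> j _; rewrite /v liftK exprMn.
  have hr2 : r ^+ 2 = 1 + \sum_(i < n) a i ^+ 2 by rewrite sqr_sqrtr // ltW.
  rewrite -mulr_suml -[X in X + _]mul1r -mulrDl -hr2 exprVn mulfV //.
  by rewrite expf_neq0 // gt_eqF.
have sqv : (sqnorm_poly R n).@[v] = 1.
  rewrite /sqnorm_poly raddf_sum /= -vn; apply: eq_bigr => i _.
  by rewrite rmorphXn /= mevalXU.
have hH : forall i, 0 <= ((1 :: Gtilde g)`_i).@[v].
  case=> [|i] /=; first by rewrite meval1.
  rewrite /Gtilde nth_cat size_map; case: ltnP => hi.
    rewrite (nth_map 0) // homog_eval; apply: mulr_ge0.
      by apply: exprn_ge0; rewrite invr_ge0 ltW.
    exact: Sa.
  case: (i - size g)%N => [|[|[|l]]] /=.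
  - by rewrite mevalXU v0 invr_ge0 ltW.
  - by rewrite mevalB sqv meval1 subrr.
  - by rewrite mevalB sqv meval1 subrr.
  - by rewrite nth_nil meval0.
pose y : mseq R n k := fun b => ('X_[b : 'X_{1..n.+1}]).@[v].
have yQ : dual_cone k Q y.
  move=> q [sig [hsig ->]]; rewrite riesz_sum; apply: sumr_ge0 => j _.
  have [[qs hqs] hdeg] := hsig j (ltn_ord j).
  rewrite riesz_eval; last first.
    by move: hdeg; rewrite /mdegree -ltnS; apply: leq_trans; exact: leqSpred.
  rewrite mevalM; apply: mulr_ge0; last exact: hH.
  rewrite hqs raddf_sum /=; apply: sumr_ge0 => q0 _.
  by rewrite rmorphXn /=; exact: sqr_ge0.
have Pp : P (proj_lin y) by exists y.
have p0 : 0 < proj_lin y ord0 ord0.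
  rewrite /proj_lin mxE riesz_eval; last by rewrite msizeX mdeg1; lia.
  by rewrite mevalXU v0 invr_gt0.
have P0 : P 0.
  exists (fun _ => 0 : R).
    by move=> q _; rewrite riesz_y0.
  by apply/rowP => i; rewrite !mxE riesz_y0.
have PD : forall u w, P u -> P w -> P (u + w).
  move=> u w [y1 h1 <-] [y2 h2 <-]; exists (fun b => y1 b + y2 b).
    by move=> q Qq; rewrite riesz_yD addr_ge0 //; [exact: h1 | exact: h2].
  by apply/rowP => i; rewrite !mxE riesz_yD.
have PZ : forall c u, 0 <= c -> P u -> P (c *: u).
  move=> c u c0 [y1 h1 <-]; exists (fun b => c * y1 b).
    by move=> q Qq; rewrite riesz_yZ mulr_ge0 //; exact: h1.
  by apply/rowP => i; rewrite !mxE riesz_yZ.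
have P00 : forall q, P q -> 0 <= q ord0 ord0.
  by move=> q [y1 h1 <-]; rewrite mxE; exact: h1.
exact: (@cone_ri R n P _ P0 PD PZ P00 Pp p0).
Qed.
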